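(* Let $n\ge2$, $F\in\mathcal{F}_{n,n-1}$, $1\le k\le n$, and $a,b\in I_{F,k}$ with $a\ne b$. Then the function $\xi_{a,b}(\lambda)=\lambda_a-\lambda_b$ on $\mathbb{R}^{n+1}$ lies in the real linear span of the functions $\xi_{F,l}(\lambda)=\lambda_{F_l}-\lambda_{F_l^-}$, $k\le l\le n$.
   Context: Coordinates of $\mathbb{R}^{n+1}$ are indexed $\lambda=(\lambda_0,\dots,\lambda_n)$. The set $\mathcal{F}_{n,n-1}$ consists of sequences $F=(i_1,\sigma_1,\dots,i_{n-1},\sigma_{n-1})$ with $\sigma_l\in\{+,-\}$ built inductively: $I_{F,1}=\{0,\dots,n\}$; for each $1\le l\le n-1$, $i_l$ is an element of $I_{F,l}$ which is not its smallest element; writing $F_l:=i_l$ and $F_l^-$ for the largest element of $I_{F,l}$ smaller than $i_l$, set $I_{F,l+1}=I_{F,l}\setminus\{F_l\}$ if $\sigma_l=+$ and $I_{F,l+1}=I_{F,l}\setminus\{F_l^-\}$ if $\sigma_l=-$. The set $I_{F,n}$ has two elements; $F_n^-$ denotes the smaller and $F_n$ the larger. *)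

(* Defs.v *)
From HB Require Import structures.
From mathcomp Require Import all_boot all_order all_algebra.
Set Implicit Arguments. Unset Strict Implicit. Unset Printing Implicit Defensive.
Import Order.TTheory GRing.Theory Num.Theory.

(* Coordinates of R^{n+1} are indexed by 'I_n.+1 = {0,...,n}.
   An element F = (i_1,s_1,...,i_{n-1},s_{n-1}) of F_{n,n-1} is given by
   two sequences  i : nat -> 'I_n.+1  and  s : nat -> bool  (true = '+',
   false = '-'), of which only the values at l = 1..n-1 matter. *)

Definition predIn (n : nat) (I : {set 'I_n.+1}) (x : 'I_n.+1) : 'I_n.+1 :=
  inord (\max_(j in I | (j < x)%N) (nat_of_ord j)).

(* I_{F,l}; I_{F,0} is an unused dummy, I_{F,1} = {0,...,n}. *)
Fixpoint IF (n : nat) (i : nat -> 'I_n.+1) (s : nat -> bool) (l : nat)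
  : {set 'I_n.+1} :=
  match l with
  | 0 => setT
  | l'.+1 =>
      if l' is 0 then setT
      else let I := IF i s l' in
           I :\ (if s l' then i l' else predIn I (i l'))
  end.

Definition in_Fnn1 (n : nat) (i : nat -> 'I_n.+1) (s : nat -> bool) : Prop :=
  forall l : nat, (1 <= l <= n.-1)%N ->
    i l \in IF i s l /\ exists2 j : 'I_n.+1, j \in IF i s l & (j < i l)%N.

Definition Fl (n : nat) (i : nat -> 'I_n.+1) (s : nat -> bool) (l : nat)
  : 'I_n.+1 :=
  if (l < n)%N then i l
  else inord (\max_(j in IF i s n) (nat_of_ord j)).

Definition Flm (n : nat) (i : nat -> 'I_n.+1) (s : nat -> bool) (l : nat)
  : 'I_n.+1 :=
  predIn (IF i s l) (Fl i s l).

Definition xiF (R : ringType) (n : nat) (i : nat -> 'I_n.+1) (s : nat -> bool)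
  (l : nat) (lam : 'I_n.+1 -> R) : R :=
  lam (Fl i s l) - lam (Flm i s l).

(* Main.v *)
Require Import Defs.
From HB Require Import structures.
From mathcomp Require Import all_boot all_order all_algebra.
From mathcomp Require Import zify.
Import Order.TTheory GRing.Theory Num.Theory.
Local Open Scope ring_scope.

Lemma predIn_spec (n : nat) (I : {set 'I_n.+1}) (x : 'I_n.+1) :
  (exists2 j : 'I_n.+1, j \in I & (j < x)%N) ->
  predIn I x \in I /\ (predIn I x < x)%N.
Proof.
case=> j jI jx.
have hc : (0 < #|[pred j : 'I_n.+1 | (j \in I) && (j < x)%N]|)%N.
  by apply/card_gt0P; exists j; rewrite inE jI jx.
case: (eq_bigmax_cond (fun j : 'I_n.+1 => nat_of_ord j) hc) => j0.
rewrite inE => /andP[j0I j0x] E.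
rewrite /predIn.
have -> : \max_(j in I | (j < x)%N) (nat_of_ord j) = nat_of_ord j0 by rewrite -E.
by rewrite inord_val.
Qed.

Lemma max_spec (n : nat) (I : {set 'I_n.+1}) (z : 'I_n.+1) : z \in I ->
  let m := (inord (\max_(j in I) (nat_of_ord j)) : 'I_n.+1) in
  m \in I /\ forall y, y \in I -> (y <= m)%N.
Proof.
move=> zI m.
have hc : (0 < #|I|)%N by apply/card_gt0P; exists z.
case: (eq_bigmax_cond (fun j : 'I_n.+1 => nat_of_ord j) hc) => j0 j0I E.
have hm : m = j0 by rewrite /m E inord_val.
split; first by rewrite hm.
move=> y yI; rewrite hm -E; exact: (leq_bigmax_cond y yI).
Qed.

Lemma IF_S (n : nat) (i : nat -> 'I_n.+1) (s : nat -> bool) (k : nat) :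
  (1 <= k)%N -> IF i s k.+1 = IF i s k :\ (if s k then i k else predIn (IF i s k) (i k)).
Proof. by case: k. Qed.

Lemma IF_card (n : nat) (i : nat -> 'I_n.+1) (s : nat -> bool) :
  in_Fnn1 i s -> forall l, (1 <= l <= n)%N -> #|IF i s l| = (n.+2 - l)%N.
Proof.
move=> hF; elim=> [//|l IH] /andP[h1 h2].
case: l IH h1 h2 => [_ _ _|l IH _ h2]; first by rewrite /= cardsT card_ord; lia.
rewrite IF_S //.
have [hi [j jI jx]] := hF l.+1 ltac:(apply/andP; split; lia).
have [pI _] := @predIn_spec _ _ _ (ex_intro2 _ _ j jI jx).
have := cardsD1 (if s l.+1 then i l.+1 else predIn (IF i s l.+1) (i l.+1)) (IF i s l.+1).
rewrite IH; last by apply/andP; split; lia.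
set r := (if s l.+1 then _ else _).
have -> : (r \in IF i s l.+1) = true by rewrite /r; case: (s l.+1).
move: #|_ :\ r| => m; lia.
Qed.
Set Implicit Arguments. Unset Strict Implicit.

Definition spanF (R : realFieldType) (n : nat) (i : nat -> 'I_n.+1) (s : nat -> bool)
  (k : nat) (f : ('I_n.+1 -> R) -> R) :=
  exists c : nat -> R, forall lam, f lam = \sum_(k <= l < n.+1) c l * xiF i s l lam.

Lemma span_ext (R : realFieldType) n i s k (f g : ('I_n.+1 -> R) -> R) :
  (forall lam, f lam = g lam) -> spanF i s k g -> spanF i s k f.
Proof. by move=> E [c Hc]; exists c => lam; rewrite E Hc. Qed.

Lemma span0 (R : realFieldType) n i s k : spanF i s k (fun _ : 'I_n.+1 -> R => 0).
Proof. by exists (fun _ => 0) => lam; rewrite big1 // => l _; rewrite mul0r. Qed.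

Lemma spanB (R : realFieldType) n i s k (f g : ('I_n.+1 -> R) -> R) :
  spanF i s k f -> spanF i s k g -> spanF i s k (fun lam => f lam - g lam).
Proof.
move=> [c1 H1] [c2 H2]; exists (fun l => c1 l - c2 l) => lam.
by rewrite H1 H2 -sumrB; apply: eq_bigr => l _; rewrite mulrBl.
Qed.

Lemma span_mono (R : realFieldType) n i s k (f : ('I_n.+1 -> R) -> R) :
  (k <= n)%N -> spanF i s k.+1 f -> spanF i s k f.
Proof.
move=> kn [c Hc]; exists (fun l => if l == k then 0 else c l) => lam.
rewrite Hc [RHS]big_ltn ?ltnS // eqxx mul0r add0r.
apply: eq_big_nat => l /andP[h _].
by rewrite (gtn_eqF h).
Qed.

Lemma span_xi (R : realFieldType) n i s k :
  (k <= n)%N -> spanF i s k (fun lam : 'I_n.+1 -> R => xiF i s k lam).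
Proof.
move=> kn; exists (fun l => if l == k then 1 else 0) => lam.
rewrite big_ltn ?ltnS // eqxx mul1r big_nat_cond big1 ?addr0 //.
by move=> l /andP[/andP[h _] _]; rewrite (gtn_eqF h) mul0r.
Qed.

Lemma Fl_lt (n : nat) (i : nat -> 'I_n.+1) (s : nat -> bool) l : (l < n)%N -> Fl i s l = i l.
Proof. by move=> h; rewrite /Fl h. Qed.

Lemma diff_span (R : realFieldType) (n : nat) (i : nat -> 'I_n.+1) (s : nat -> bool) :
  (2 <= n)%N -> in_Fnn1 i s -> forall d k, (k + d = n)%N -> (1 <= k)%N ->
  forall x y, x \in IF i s k -> y \in IF i s k ->
  spanF i s k (fun lam : 'I_n.+1 -> R => lam x - lam y).
Proof.
move=> n2 hF; elim=> [|d IH] k hkd k1 x y xI y1.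
- rewrite addn0 in hkd; subst k.
  have hc := @IF_card n i s hF n ltac:(apply/andP; split; lia).
  have [hiI himax] := @max_spec _ _ _ xI.
  set hi := inord _ in hiI himax.
  have hFl : Fl i s n = hi by rewrite /Fl ltnn.
  have : (0 < #|IF i s n :\ hi|)%N.
    move: (cardsD1 hi (IF i s n)); rewrite hiI hc /=. move: #|_ :\ hi| => m; lia.
  move=> /card_gt0P [z]; rewrite !inE => /andP[zhi zI].
  have zlt : (z < hi)%N by rewrite ltn_neqAle himax // andbT; apply: contra zhi => /eqP h; apply/eqP/val_inj.
  have [loI lolt] := @predIn_spec _ _ _ (ex_intro2 _ _ z zI zlt).
  set lo := predIn _ _ in loI lolt.
  have hFlm : Flm i s n = lo by rewrite /Flm hFl.
  have two : forall w, w \in IF i s n -> w = hi \/ w = lo.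
    move=> w wI; case: (eqVneq w hi) => [->|whi]; first by left.
    case: (eqVneq w lo) => [->|wlo]; first by right.
    have : (0 < #|IF i s n :\ hi :\ lo|)%N by apply/card_gt0P; exists w; rewrite !inE wlo whi wI.
    have lohi : lo != hi by apply/eqP => h; rewrite h ltnn in lolt.
    move: (cardsD1 hi (IF i s n)) (cardsD1 lo (IF i s n :\ hi)).
    rewrite hiI hc !inE lohi loI /=.
    move: #|_ :\ hi :\ lo| => m2; move: #|_ :\ hi| => m1; lia.
  have key : forall w, w \in IF i s n -> spanF i s n (fun lam : 'I_n.+1 -> R => lam w - lam lo).
    move=> w /two [->|->].
    + apply: span_ext (span_xi _ _ _ (leqnn n)) => lam; by rewrite /xiF hFl hFlm.
    + apply: span_ext (span0 _ _ _ _) => lam; by rewrite subrr.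
  apply: span_ext (spanB (key x xI) (key y y1)) => lam; rewrite opprB addrA subrK //.
- have kn : (k < n)%N by lia.
  have [ikI [j jI jx]] := hF k ltac:(apply/andP; split; lia).
  have [pI plt] := @predIn_spec _ _ _ (ex_intro2 _ _ j jI jx).
  set p := predIn _ _ in pI plt.
  have pik : p != i k by apply/eqP => h; rewrite h ltnn in plt.
  have hxi : forall lam : 'I_n.+1 -> R, xiF i s k lam = lam (i k) - lam p.
    by move=> lam; rewrite /xiF /Flm Fl_lt.
  set q := if s k then p else i k.
  have qI : q \in IF i s k.+1.
    rewrite IF_S // !inE /q; case: (s k); rewrite ?pI ?ikI ?pik // eq_sym pik //.
  have key : forall w, w \in IF i s k -> spanF i s k (fun lam : 'I_n.+1 -> R => lam w - lam q).
    move=> w wI.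
    case: (boolP (w \in IF i s k.+1)) => wI'.
    + apply: span_mono; first lia.
      exact: (IH k.+1 ltac:(lia) ltac:(lia) w q wI' qI).
    + move: wI'; rewrite IF_S // !inE wI andbT negbK => /eqP ->.
      rewrite /q; case: (s k).
      * apply: span_ext (span_xi _ _ _ (ltnW kn)) => lam; by rewrite hxi.
      * apply: span_ext (spanB (span0 _ _ _ _) (span_xi _ _ _ (ltnW kn))) => lam.
        by rewrite hxi sub0r opprB.
  apply: span_ext (spanB (key x xI) (key y y1)) => lam; rewrite opprB addrA subrK //.
Qed.

Theorem lemma5p8 (R : realFieldType) (n : nat) (i : nat -> 'I_n.+1)
  (s : nat -> bool) (k : nat) (a b : 'I_n.+1) :
  (2 <= n)%N -> in_Fnn1 i s -> (1 <= k <= n)%N ->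
  a \in IF i s k -> b \in IF i s k -> a != b ->
  exists c : nat -> R, forall lam : 'I_n.+1 -> R,
    lam a - lam b = \sum_(k <= l < n.+1) c l * xiF i s l lam.
Proof.
move=> n2 hF /andP[k1 kn] aI bI _.
exact: (@diff_span R n i s n2 hF (n - k) k ltac:(lia) k1 a b aI bI).
Qed.
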